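(* Fix a nondegenerate triangle $E=E_1E_2E_3$ in the real affine plane and use barycentric coordinates of points with respect to $E$. Call a ''parallel triangle'' any triangle $D=D_1D_2D_3$ whose sides $D_iD_j$ are parallel to $E_iE_j$; such $D$ is the image of $E$ (with $D_i\mapsto E_i$ reversed) under a homothety, i.e. there is a unique real $d\neq 0$ such that the homothety (or translation, when $d=1$) of ratio $d$ maps $D_i$ to $E_i$ for all $i$. If $(d_1,d_2,d_3)$, $d_1+d_2+d_3=1$, are the barycentric coordinates of the centroid of $D$, the barycentric coordinates of $D$ are $(\delta_1,\delta_2,\delta_3)=(d\,d_1,d\,d_2,d\,d_3)$. For parallel triangles $A,B$ define the pre-sum $C=A\boxplus B$ by $C_k=A_iB_j\cap A_jB_i$ for each permutation $(i,j,k)$ of $(1,2,3)$, and define the sum $A+B$ as the triangle obtained from $C$ by the point reflection in the centroid of $C$ (keeping vertex labels). Let $A,B$ be parallel triangles with barycentric coordinates $(\alpha_1,\alpha_2,\alpha_3)$ and $(\beta_1,\beta_2,\beta_3)$ such that the points $C_1,C_2,C_3$ are well defined points of the affine plane forming a nondegenerate triangle. Then $A+B$ is a parallel triangle whose barycentric coordinates are $(\alpha_1+\beta_1,\alpha_2+\beta_2,\alpha_3+\beta_3)$.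
   Context: Barycentric coordinates of a point $X$ with respect to $E$ are the reals $(x_1,x_2,x_3)$ with $x_1+x_2+x_3=1$ and $X=x_1E_1+x_2E_2+x_3E_3$. The centroid of a triangle is the mean of its vertices. *)

(* Defs.v *)
From HB Require Import structures.
From mathcomp Require Import all_boot all_order all_algebra.
Set Implicit Arguments. Unset Strict Implicit. Unset Printing Implicit Defensive.
Import Order.TTheory GRing.Theory Num.Theory.
Local Open Scope ring_scope.

Section Defs.
Variable R : realFieldType.
Definition point := 'rV[R]_2.

Definition cross (u v : point) : R :=
  u ord0 ord0 * v ord0 ord_max - u ord0 ord_max * v ord0 ord0.

Definition nondeg (P : 'I_3 -> point) : Prop :=
  cross (P (1%R : 'I_3) - P 0%R) (P (2%:R : 'I_3) - P 0%R) != 0.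

Definition centroid (P : 'I_3 -> point) : point := 3%:R^-1 *: \sum_i P i.

Definition bary (E : 'I_3 -> point) (X : point) (x : 'I_3 -> R) : Prop :=
  \sum_i x i = 1 /\ X = \sum_i x i *: E i.

Definition parallel_tri (E D : 'I_3 -> point) : Prop :=
  nondeg D /\ forall i j : 'I_3, cross (D i - D j) (E i - E j) = 0.

Definition homothety_ratio (E D : 'I_3 -> point) (d : R) : Prop :=
  d != 0 /\ exists t : point, forall i, E i = d *: D i + t.

Definition tri_bary (E D : 'I_3 -> point) (delta : 'I_3 -> R) : Prop :=
  exists (d : R) (dk : 'I_3 -> R),
    homothety_ratio E D d /\ bary E (centroid D) dk /\ forall i, delta i = d * dk i.

Definition on_line (P Q X : point) : Prop := P != Q /\ cross (X - P) (Q - P) = 0.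

Definition unique_meet (P Q P' Q' X : point) : Prop :=
  on_line P Q X /\ on_line P' Q' X /\
  forall Y, on_line P Q Y -> on_line P' Q' Y -> Y = X.

Definition presum (A B C : 'I_3 -> point) : Prop :=
  forall i j k : 'I_3, i != j -> j != k -> i != k ->
    unique_meet (A i) (B j) (A j) (B i) (C k).

Definition tri_sum (C : 'I_3 -> point) : 'I_3 -> point :=
  fun k => 2%:R *: centroid C - C k.
End Defs.

(* Main.v *)
Require Import Defs.
From HB Require Import structures.
From mathcomp Require Import all_boot all_order all_algebra.
From mathcomp Require Import ring lra.
Import Order.TTheory GRing.Theory Num.Theory.
Local Open Scope ring_scope.

Section S.
Variable R : realFieldType.
Implicit Types (P Q : point R).

Lemma key (Ai Aj Bi Bj Ck ei ej tA tB : point R) (a b : R) :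
  a != 0 -> b != 0 ->
  Ai = a^-1 *: (ei - tA) -> Aj = a^-1 *: (ej - tA) ->
  Bi = b^-1 *: (ei - tB) -> Bj = b^-1 *: (ej - tB) ->
  unique_meet Ai Bj Aj Bi Ck ->
  a + b != 0 /\ Ck = (a + b)^-1 *: (ei + ej - tA - tB).
Proof.
move=> a0 b0 hAi hAj hBi hBj [[nAB hC1] [[nAB' hC2] uniq]].
have [ab0|ab0] := eqVneq (a + b) 0.
  exfalso.
  have hb : b = - a by rewrite -(subr0 b) -ab0; ring.
  set v := Bj - Ai.
  have hv : Bi - Aj = v.
    rewrite /v hAi hAj hBi hBj hb; apply/rowP => k; rewrite !mxE.
    field; exact: a0.
  have H : Ck + v = Ck -> Ai = Bj.
    rewrite -{2}(addr0 Ck) => /addrI; rewrite /v.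
    by move/eqP; rewrite subr_eq0 => /eqP ->.
  apply/(negP nAB)/eqP; apply: H; apply: uniq.
  - split=> //; transitivity (cross (Ck - Ai) (Bj - Ai)); last exact: hC1.
    rewrite /cross /v !mxE; ring.
  - split=> //; transitivity (cross (Ck - Aj) (Bi - Aj)); last exact: hC2.
    rewrite hv /cross /v !mxE; ring.
split=> //.
symmetry; apply: uniq.
- split => //; rewrite /cross hAi hBj !mxE; field; by rewrite ?a0 ?b0 ?ab0.
- split => //; rewrite /cross hAj hBi !mxE; field; by rewrite ?a0 ?b0 ?ab0.
Qed.

Lemma sum3 (V : zmodType) (F : 'I_3 -> V) : \sum_i F i = F 0 + F 1 + F 2%:R.
Proof.
rewrite !big_ord_recr big_ord0 /= add0r.
by congr (F _ + F _ + F _); apply/val_inj.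
Qed.

Lemma ord3 (k : 'I_3) : k = 0 \/ k = 1 \/ k = 2%:R.
Proof.
case: k => [[|[|[|//]]]] ? ; [left|right;left|right;right]; exact/val_inj.
Qed.

Lemma from_bary (E A : 'I_3 -> point R) alpha :
  tri_bary E A alpha ->
  exists a tA, [/\ a != 0, forall i, A i = a^-1 *: (E i - tA),
     \sum_i alpha i = a & \sum_i alpha i *: E i = centroid E - tA].
Proof.
move=> [a [dA [[a0 [tA htA]] [[hs hc] hal]]]].
have hA : forall i, A i = a^-1 *: (E i - tA).
  by move=> i; rewrite htA addrK scalerA mulVf // scale1r.
exists a, tA; split => //.
  by under eq_bigr do rewrite hal; rewrite -mulr_sumr hs mulr1.
under eq_bigr do rewrite hal -scalerA.
rewrite -scaler_sumr -hc /centroid !sum3 !hA.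
have h3 : (3%:R : R) != 0 by rewrite pnatr_eq0.
apply/rowP => k; rewrite !mxE; field; by rewrite ?h3 ?a0.
Qed.

End S.
Arguments key {R Ai Aj Bi Bj Ck ei ej tA tB a b}.

Theorem theorem5 (R : realFieldType) (E A B C : 'I_3 -> point R)
    (alpha beta : 'I_3 -> R) :
  nondeg E ->
  parallel_tri E A -> tri_bary E A alpha ->
  parallel_tri E B -> tri_bary E B beta ->
  presum A B C -> nondeg C ->
  parallel_tri E (tri_sum C) /\
  tri_bary E (tri_sum C) (fun i => alpha i + beta i).
Proof.
move=> nE _ /from_bary [a [tA [a0 hA sA SA]]] _ /from_bary [b [tB [b0 hB sB SB]]] hP _.
have [ab0 hC0] := key a0 b0 (hA _) (hA _) (hB _) (hB _) (hP 1 2%:R 0 isT isT isT).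
have [_ hC1] := key a0 b0 (hA _) (hA _) (hB _) (hB _) (hP 0 2%:R 1 isT isT isT).
have [_ hC2] := key a0 b0 (hA _) (hA _) (hB _) (hB _) (hP 0 1 2%:R isT isT isT).
set c := (a + b)^-1.
set t' := tA + tB - centroid E.
have h3 : (3%:R : R) != 0 by rewrite pnatr_eq0.
have hD : forall k, tri_sum C k = c *: (E k - t').
  move=> k; rewrite /tri_sum /centroid !sum3.
  case: (ord3 k) => [->|[->|->]]; rewrite hC0 hC1 hC2 /t' /centroid sum3;
  apply/rowP => j; rewrite !mxE; rewrite /c; field; by rewrite ?h3 ?ab0.
split.
  split.
    rewrite /nondeg !hD.
    have -> : forall u v w : point R, cross (c *: (v - t') - c *: (u - t')) (c *: (w - t') - c *: (u - t'))
       = c ^+ 2 * cross (v - u) (w - u).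
      by move=> u v w; rewrite /cross !mxE; ring.
    by rewrite mulf_neq0 // expf_neq0 // invr_neq0.
  by move=> i j; rewrite !hD /cross !mxE; ring.
exists (a + b), (fun i => c * (alpha i + beta i)).
split; [split => //; exists t' => i|split; [split|]].
- by rewrite hD scalerA divff // scale1r subrK.
- by rewrite -mulr_sumr big_split /= sA sB mulVf.
- transitivity (c *: (\sum_i alpha i *: E i + \sum_i beta i *: E i)).
    rewrite SA SB /centroid !sum3 !hD /t' /centroid sum3.
    apply/rowP => j; rewrite !mxE /c; field; by rewrite ?h3 ?ab0.
  rewrite -big_split scaler_sumr; apply: eq_bigr => i _.
  by rewrite -scalerA scalerDl.
- by move=> i; rewrite mulrA divff // mul1r.
Qed.
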